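(* Let $\Omega\subset\mathbb{R}^n$ ($n\ge2$) be a bounded domain with Lipschitz boundary and $\zeta,\eta\in M_0(\Omega)$. Then for every $\epsilon>0$ there are constants $N_3=N_3(\epsilon,\eta^+)>0$ and $N_4=N_4(\epsilon,\eta^+,|\Omega|)>0$ such that for all $u\in L^{\zeta(x)+\epsilon}(\Omega)$ $$\int_\Omega|u|^{\zeta(x)}\,\big|\ln|u|\big|^{\eta(x)}dx\le N_3\int_\Omega|u|^{\zeta(x)+\epsilon}dx+N_4.$$
   Context: $M_0(\Omega)$ is the set of measurable $p:\Omega\to[1,\infty]$ with $1\le p^-\le p(x)\le p^+<\infty$ a.e., where $p^-=\operatorname{ess\,inf}_\Omega p$, $p^+=\operatorname{ess\,sup}_\Omega p$. $L^{p(x)}(\Omega)=\{u \text{ measurable}:\int_\Omega|u|^{p(x)}dx<\infty\}$. $|\Omega|$ is the Lebesgue measure of $\Omega$. *)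

(* Defs.v *)
From HB Require Import structures.
From mathcomp Require Import all_boot all_order all_algebra.
From mathcomp Require Import all_classical all_reals all_analysis.
Set Implicit Arguments. Unset Strict Implicit. Unset Printing Implicit Defensive.
Import Order.TTheory GRing.Theory Num.Theory.
Import numFieldNormedType.Exports.
Local Open Scope classical_set_scope.
Local Open Scope ring_scope.

(* R^n is modelled as n.-tuple R, which carries the product (= Borel)
   sigma-algebra of the Borel sigma-algebra of R (library instance). *)

Section Euclid.
Variable R : realType.

Definition enormf (k : nat) (v : 'I_k -> R) : R :=
  Num.sqrt (\sum_(i < k) v i ^+ 2).

Variable n : nat.

Definition eball (x : n.-tuple R) (r : R) : set (n.-tuple R) :=
  [set y | enormf (fun i => tnth y i - tnth x i) < r].

Definition is_open_set (A : set (n.-tuple R)) : Prop :=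
  forall x, A x -> exists2 r : R, 0 < r & eball x r `<=` A.

Definition is_connected_set (A : set (n.-tuple R)) : Prop :=
  forall U V, is_open_set U -> is_open_set V -> A `<=` U `|` V ->
    A `&` U `&` V = set0 -> A `&` U = set0 \/ A `&` V = set0.

Definition is_domain (A : set (n.-tuple R)) : Prop :=
  A !=set0 /\ is_open_set A /\ is_connected_set A.

Definition is_bounded_set (A : set (n.-tuple R)) : Prop :=
  exists M : R, forall x, A x -> enormf (fun i => tnth x i) <= M.

Definition topo_boundary (A : set (n.-tuple R)) : set (n.-tuple R) :=
  [set x | forall r : R, 0 < r ->
     (exists y, eball x r y /\ A y) /\ (exists y, eball x r y /\ ~ A y)].

Definition orthogonal_mx (Q : 'M[R]_n) : Prop := Q *m Q^T = 1%:M.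

Definition lipschitz_fun (k : nat) (g : ('I_k -> R) -> R) : Prop :=
  exists L : R, forall a b, `|g a - g b| <= L * enormf (fun i => a i - b i).

Definition first_coords (y : 'I_n -> R) : 'I_n.-1 -> R :=
  fun k => y (widen_ord (leq_pred n) k).
Definition last_coord (y : 'I_n -> R) : R :=
  \sum_(i < n | val i == n.-1) y i.

(* Lipschitz boundary: locally, after a rigid motion, Omega is the region
   below the graph of a Lipschitz function of n-1 variables. *)
Definition lipschitz_boundary (A : set (n.-tuple R)) : Prop :=
  forall x0, topo_boundary A x0 ->
    exists r : R, 0 < r /\
    exists Q : 'M[R]_n, orthogonal_mx Q /\
    exists g : ('I_n.-1 -> R) -> R, lipschitz_fun g /\
    forall x, eball x0 r x ->
      let y := fun i : 'I_n => \sum_(j < n) Q i j * (tnth x j - tnth x0 j) in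
      (A x <-> last_coord y < g (first_coords y)).

(* Lebesgue measure on (the Borel sets of) R^n: the measure giving every
   box ]a,b] its volume (this determines it uniquely). *)
Definition is_lebesgue_measure (mu : {measure set (n.-tuple R) -> \bar R}) : Prop :=
  forall a b : n.-tuple R, (forall i, tnth a i <= tnth b i) ->
    mu [set x | forall i, tnth a i < tnth x i <= tnth b i] =
    (\prod_(i < n) (tnth b i - tnth a i))%:E.

Definition ess_sup_on (mu : {measure set (n.-tuple R) -> \bar R})
  (D : set (n.-tuple R)) (f : n.-tuple R -> R) : \bar R :=
  ereal_inf [set y : \bar R | {ae mu, forall x, D x -> ((f x)%:E <= y)%E}].
Definition ess_inf_on (mu : {measure set (n.-tuple R) -> \bar R})
  (D : set (n.-tuple R)) (f : n.-tuple R -> R) : \bar R :=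
  ereal_sup [set y : \bar R | {ae mu, forall x, D x -> (y <= (f x)%:E)%E}].

Definition M0 (mu : {measure set (n.-tuple R) -> \bar R})
  (D : set (n.-tuple R)) (p : n.-tuple R -> R) : Prop :=
  measurable_fun D p /\ (forall x, D x -> 1 <= p x) /\
  (1%:E <= ess_inf_on mu D p)%E /\ (ess_sup_on mu D p < +oo)%E.

Definition Lpx (mu : {measure set (n.-tuple R) -> \bar R})
  (D : set (n.-tuple R)) (p u : n.-tuple R -> R) : Prop :=
  measurable_fun D u /\
  (\int[mu]_(x in D) (`|u x| `^ p x)%:E < +oo)%E.

End Euclid.

(* Main.v *)
Require Import Defs.
From HB Require Import structures.
From mathcomp Require Import all_boot all_order all_algebra.
From mathcomp Require Import all_classical all_reals all_analysis.
From mathcomp Require Import ring lra.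
Import Order.TTheory GRing.Theory Num.Theory.
Local Open Scope classical_set_scope.
Local Open Scope ring_scope.
Set Implicit Arguments. Unset Strict Implicit.

Section S.
Variable R : realType.

Lemma pow_le_1Xn (s e : R) n : 0 <= s -> 0 <= e -> e <= n%:R -> s `^ e <= 1 + s ^+ n.
Proof.
move=> s0 e0 en.
have [s1|s1] := leP s 1.
  rewrite -(addr0 (s `^ e)) lerD ?exprn_ge0//.
  have [->|s0'] := eqVneq s 0.
    by rewrite /powR eqxx; case: (e == 0).
  rewrite -(powRr0 s) ger_powR // lt_neqAle eq_sym s0' s0 s1 //.
rewrite -(add0r (s `^ e)) lerD //.
rewrite -(powR_mulrn n s0) ler_powR // ltW //.
Qed.

Definition KK (a : R) n := 1 + n.+1`!%:R / a ^+ n.+1.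

Lemma KK_gt0 a n : 0 < a -> 0 < KK a n.
Proof. by move=> a0; rewrite /KK ltr_wpDr // divr_ge0 // ?exprn_ge0 // ltW. Qed.

Lemma keyK (a s e : R) n : 0 < a -> 0 <= s -> 0 <= e -> e <= n.+1%:R ->
  s `^ e <= KK a n * expR (a * s).
Proof.
move=> a0 s0 e0 en.
refine (le_trans (pow_le_1Xn s0 e0 en) _).
rewrite /KK mulrDl mul1r.
have as0 : 0 <= a * s by rewrite mulr_ge0 // ltW.
apply: lerD.
  by apply: le_trans (expR_ge1Dx _); rewrite lerDl.
have -> : s ^+ n.+1 = n.+1`!%:R / a ^+ n.+1 * ((a * s) ^+ n.+1 / n.+1`!%:R).
  rewrite exprMn; field.
  by rewrite pnatr_eq0 -lt0n fact_gt0 /= expf_neq0 // gt_eqF.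
rewrite ler_wpM2l ?divr_ge0 ?exprn_ge0 ?ltW //.
by have := expR_ge1Dxn n as0; lra.
Qed.

Lemma point (eps t z e : R) n : 0 < eps -> 0 <= t -> 1 <= z -> 0 <= e ->
  e <= n.+1%:R ->
  t `^ z * `|ln t| `^ e <= KK eps n * t `^ (z + eps) + KK 1 n.
Proof.
move=> eps0 t0 z1 e0 en.
have K0 := KK_gt0 n eps0; have K1 := KK_gt0 n (@ltr01 R).
have [->|tn0] := eqVneq t 0.
  rewrite powR0 ?mul0r; last by rewrite gt_eqF // (lt_le_trans ltr01).
  by rewrite addr_ge0 ?mulr_ge0 ?powR_ge0 ?ltW.
have tp : 0 < t by rewrite lt_neqAle eq_sym tn0.
have [t1|t1] := leP t 1.
  have lnt : `|ln t| = - ln t by rewrite ler0_norm // ln_le0.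
  have h1 : t `^ z <= t by rewrite ge1r_powR // tp t1.
  have h2 : `|ln t| `^ e <= KK 1 n * t^-1.
    have lt0 : 0 <= - ln t by rewrite oppr_ge0 ln_le0.
    have := keyK (@ltr01 R) lt0 e0 en.
    by rewrite lnt mul1r expRN lnK ?posrE.
  have h3 : t `^ z * `|ln t| `^ e <= t * (KK 1 n * t^-1).
    by apply: ler_pM; rewrite ?powR_ge0.
  have h4 : t * (KK 1 n * t^-1) = KK 1 n by rewrite mulrCA mulfV // mulr1.
  have h5 : 0 <= KK eps n * t `^ (z + eps) by rewrite mulr_ge0 ?powR_ge0 // ltW.
  rewrite h4 in h3; lra.
have lnt : `|ln t| = ln t by rewrite ger0_norm // ln_ge0 // (ltW t1).
have l0 : 0 <= ln t by rewrite ln_ge0 // (ltW t1).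
have h2 := keyK eps0 l0 e0 en.
have h3 : expR (eps * ln t) = t `^ eps by rewrite /powR (negPf tn0).
have h4 : t `^ (z + eps) = t `^ z * t `^ eps by rewrite powRD // tn0 implybT.
have h5 : t `^ z * `|ln t| `^ e <= t `^ z * (KK eps n * t `^ eps).
  by rewrite lnt -h3 ler_wpM2l ?powR_ge0.
rewrite h4; apply: (le_trans h5); rewrite mulrCA mulrA -[X in X <= _]addr0.
by rewrite lerD2l ltW.
Qed.

Lemma mpow d (T : measurableType d) (D : set T) (a b : T -> R) :
  measurable D -> measurable_fun D a -> measurable_fun D b ->
  (forall x, 0 <= a x) -> (forall x, D x -> b x != 0) ->
  measurable_fun D (fun x => a x `^ b x).
Proof.
move=> mD ma mb a0 b0.
apply: (@eq_measurable_fun _ _ _ _ D (fun x => a x * expR ((b x - 1) * ln (a x)))).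
  move=> x; rewrite inE => Dx.
  have [->|an0] := eqVneq (a x) 0.
    by rewrite mul0r powR0 // b0.
  rewrite /powR (negPf an0) -{1}(@lnK _ (a x)) ?posrE; last first.
    by rewrite lt_neqAle eq_sym an0 a0.
  by rewrite -expRD; congr expR; ring.
apply: measurable_realfun.measurable_funM => //.
apply: measurableT_comp => //.
apply: measurable_realfun.measurable_funM.
  by apply: measurable_realfun.measurable_funB => //.
exact: measurableT_comp.
Qed.
End S.

Theorem corollary3p3 (R : realType) :
  forall eps : R, 0 < eps ->
  forall etap : R,
  exists2 N3 : R, 0 < N3 &
  forall V : R,
  exists2 N4 : R, 0 < N4 &
  forall (n : nat) (Omega : set (n.-tuple R))
         (mu : {measure set (n.-tuple R) -> \bar R})
         (zeta eta : n.-tuple R -> R),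
    (2 <= n)%N ->
    is_lebesgue_measure mu ->
    measurable Omega ->
    is_domain Omega -> is_bounded_set Omega -> lipschitz_boundary Omega ->
    mu Omega = V%:E ->
    M0 mu Omega zeta -> M0 mu Omega eta ->
    ess_sup_on mu Omega eta = etap%:E ->
    forall u : n.-tuple R -> R,
      Lpx mu Omega (fun x => zeta x + eps) u ->
      (\int[mu]_(x in Omega) (`|u x| `^ zeta x * `|ln `|u x| | `^ eta x)%:E
        <= N3%:E * \int[mu]_(x in Omega) (`|u x| `^ (zeta x + eps))%:E
           + N4%:E)%E.
Proof.
move=> eps eps0 etap.
have [m hm] : exists m : nat, (`|etap| + 1 <= m.+1%:R)%R.
  exists (Num.bound (`|etap| + 1)).
  apply: (le_trans (ltW (archi_boundP _))); first by rewrite addr_ge0.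
  by rewrite ler_nat.
exists (KK eps m); first exact: KK_gt0.
move=> V; exists (KK 1 m * `|V| + 1)%R.
  by rewrite ltr_pwDr // mulr_ge0 // ltW // KK_gt0.
move=> n Om mu zeta eta _ _ mOm _ _ _ muOm [mz [z1 _]] [me [e1 _]] esup u [mu_ _].
have ae_eta : {ae mu, forall x, Om x -> (eta x <= m.+1%:R)%R}.
  have : (ess_sup_on mu Om eta < (etap + 1)%:E)%E by rewrite esup lte_fin ltrDl.
  case/ereal_inf_lt => y Sy ylt.
  apply: filterS Sy => x h Ox.
  have h1 : ((eta x)%:E < (etap + 1)%:E)%E := le_lt_trans (h Ox) ylt.
  rewrite lte_fin in h1.
  have := ler_norm etap; lra.
have mabs : measurable_fun Om (fun x => `|u x|).
  by apply: measurableT_comp mu_; exact: measurable_realfun.normr_measurable.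
have mlabs : measurable_fun Om (fun x => `|ln `|u x| |).
  apply: measurableT_comp; first exact: measurable_realfun.normr_measurable.
  by apply: measurableT_comp mabs; exact: measurable_realfun.measurable_ln.
have mg0 : measurable_fun Om (fun x => `|u x| `^ (zeta x + eps)).
  apply: mpow => //.
    by apply: measurable_realfun.measurable_funD => //; exact: measurable_cst.
  move=> x Ox; rewrite gt_eqF // (lt_le_trans ltr01) //.
  by rewrite -[1]addr0 lerD // ?z1 // ltW.
have mf0 : measurable_fun Om
    (fun x => `|u x| `^ zeta x * `|ln `|u x| | `^ eta x).
  apply: measurable_realfun.measurable_funM; apply: mpow => //.
    by move=> x Ox; rewrite gt_eqF // (lt_le_trans ltr01) // z1.
  by move=> x Ox; rewrite gt_eqF // (lt_le_trans ltr01) // e1.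
set K := KK eps m; set K1 := KK 1 m.
have K0 : (0 <= K)%R by rewrite ltW // KK_gt0.
have K10 : (0 <= K1)%R by rewrite ltW // KK_gt0.
have step1 : (\int[mu]_(x in Om) (`|u x| `^ zeta x * `|ln `|u x| | `^ eta x)%:E
   <= \int[mu]_(x in Om) (K * `|u x| `^ (zeta x + eps) + K1)%:E)%E.
  apply: ae_ge0_le_integral => //.
  - exact/measurable_realfun.measurable_EFinP.
  - by move=> x Ox; rewrite lee_fin addr_ge0 // mulr_ge0 // powR_ge0.
  - apply/measurable_realfun.measurable_EFinP.
    apply: measurable_realfun.measurable_funD; last exact: measurable_cst.
    by apply: measurable_realfun.measurable_funM => //; exact: measurable_cst.
  - apply: filterS ae_eta => x h Ox.
    rewrite lee_fin; apply: point => //; first exact: z1.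
    + by rewrite (le_trans ler01) // e1.
    + exact: h.
have step2 : (\int[mu]_(x in Om) (K * `|u x| `^ (zeta x + eps) + K1)%:E
   = K%:E * \int[mu]_(x in Om) (`|u x| `^ (zeta x + eps))%:E + K1%:E * V%:E)%E.
  under eq_integral do rewrite EFinD EFinM.
  rewrite ge0_integralD //.
  - rewrite ge0_integralZl_EFin //.
    + by rewrite (integral_cst _ mOm) muOm.
    + exact/measurable_realfun.measurable_EFinP.
  all: try (by move=> x Ox; rewrite mule_ge0 // lee_fin powR_ge0).
  all: try (by apply/measurable_realfun.measurable_EFinP; apply: measurable_realfun.measurable_funM => //; exact: measurable_cst).
  all: try exact: measurable_cst.
apply: (le_trans step1); rewrite step2 leeD //.
rewrite -EFinM lee_fin; have := ler_norm V.
have : (0 <= K1 * (`|V| - V))%R by rewrite mulr_ge0 // subr_ge0 ler_norm.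
lra.
Qed.
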